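(* Let $\epsilon>0$ and let $K(x,y)=\mathbf{1}(\|x-y\|_2\le\epsilon)$ be the $\epsilon$-neighborhood kernel. Then there exist $d,k\in\mathbb{N}$ and a finite dataset $X\subset\mathbb{R}^d$ such that $p(X)=\infty$; that is, the optimal kernel $k$-means cost of $X$ with respect to $K$ is $0$ while every interpretable decision tree with $k$ leaves on $X$ has strictly positive kernel $k$-means cost.
   Context: Kernel $k$-means cost of a partition $C_1,\dots,C_k$ of $X$ with respect to $K$: $\mathrm{cost}(C_1,\dots,C_k)=\sum_{x\in X}K(x,x)-\sum_l\frac{1}{|C_l|}\sum_{x,y\in C_l}K(x,y)$ (empty clusters contribute $0$); $\mathrm{cost}_{opt}(X)$ is its minimum over partitions into $k$ parts. An interpretable decision tree with $k$ leaves is a binary tree whose leaves partition $X$, where each internal node splits its data $X^u$ into $\{x\in X^u:x_i\in[\theta_1,\theta_2]\}$ and $\{x\in X^u:x_i\notin[\theta_1,\theta_2]\}$ for some $i\in[d]$ and reals $\theta_1<\theta_2$; $\mathrm{cost}(T,X)$ is the cost of its leaf partition. The price of explainability is $p(X)=\min_T \mathrm{cost}(T,X)/\mathrm{cost}_{opt}(X)$, with the convention that a positive number divided by $0$ is $\infty$. *)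

(* Defs.v *)
From HB Require Import structures.
From mathcomp Require Import all_boot all_order all_algebra.
From mathcomp Require Import reals.
Set Implicit Arguments. Unset Strict Implicit. Unset Printing Implicit Defensive.
Import Order.TTheory GRing.Theory Num.Theory.
Local Open Scope ring_scope.

Section KernelKMeans.
Variable R : realType.
Variable d : nat.

(* points of R^d are row vectors; coordinate i of x is x ord0 i *)
Definition point := 'rV[R]_d.

Definition dist2 (x y : point) : R :=
  Num.sqrt (\sum_(i < d) (x ord0 i - y ord0 i) ^+ 2).

Definition nbhd_kernel (eps : R) (x y : point) : R :=
  if dist2 x y <= eps then 1 else 0.

(* kernel k-means cost of a family of clusters of X (given as sequences);
   empty clusters contribute 0 since 0^-1 = 0 in MathComp *)
Definition clusters_cost (K : point -> point -> R) (X : seq point)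
    (cs : seq (seq point)) : R :=
  \sum_(x <- X) K x x
  - \sum_(C <- cs) (size C)%:R^-1 * \sum_(x <- C) \sum_(y <- C) K x y.

(* partition of X into k (possibly empty) parts, given by a labeling f *)
Definition labeling_clusters (k : nat) (f : point -> 'I_k) (X : seq point)
    : seq (seq point) :=
  [seq [seq x <- X | f x == l] | l <- enum 'I_k].

Definition partition_cost (K : point -> point -> R) (k : nat)
    (f : point -> 'I_k) (X : seq point) : R :=
  clusters_cost K X (labeling_clusters f X).

Definition is_cost_opt (K : point -> point -> R) (k : nat) (X : seq point)
    (c : R) : Prop :=
  (exists f : point -> 'I_k, partition_cost K f X = c) /\
  (forall f : point -> 'I_k, c <= partition_cost K f X).

(* interpretable decision trees: a node with (i, th1, th2) sends the points
   with x_i in [th1, th2] to the left subtree, the others to the right *)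
Inductive itree : Type :=
  | Leaf : itree
  | Node : 'I_d -> R -> R -> itree -> itree -> itree.

Fixpoint itree_valid (t : itree) : Prop :=
  match t with
  | Leaf => True
  | Node _ th1 th2 l r => th1 < th2 /\ itree_valid l /\ itree_valid r
  end.

Fixpoint nleaves (t : itree) : nat :=
  match t with
  | Leaf => 1%N
  | Node _ _ _ l r => (nleaves l + nleaves r)%N
  end.

Definition in_slab (i : 'I_d) (th1 th2 : R) (x : point) : bool :=
  (th1 <= x ord0 i) && (x ord0 i <= th2).

Fixpoint leaf_clusters (t : itree) (S : seq point) : seq (seq point) :=
  match t with
  | Leaf => [:: S]
  | Node i th1 th2 l r =>
      leaf_clusters l [seq x <- S | in_slab i th1 th2 x]
      ++ leaf_clusters r [seq x <- S | ~~ in_slab i th1 th2 x]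
  end.

Definition tree_cost (K : point -> point -> R) (t : itree) (X : seq point) : R :=
  clusters_cost K X (leaf_clusters t X).

End KernelKMeans.

(* Main.v *)
Require Import Defs.
From HB Require Import structures.
From mathcomp Require Import all_boot all_order all_algebra.
From mathcomp Require Import reals.
From mathcomp Require Import ring lra zify.
Import Order.TTheory GRing.Theory Num.Theory.
Local Open Scope ring_scope.

Section Aux.
Variable R : realType.
Variable d : nat.
Implicit Types (K : 'rV[R]_d -> 'rV[R]_d -> R) (C X : seq 'rV[R]_d).

Lemma sum1_seq (T : Type) (s : seq T) : \sum_(x <- s) (1 : R) = (size s)%:R.
Proof.
elim: s => [|x s IH]; first by rewrite big_nil.
by rewrite big_cons IH /= -add1n natrD.
Qed.

Lemma sum_mem_ge (T : eqType) (s : seq T) (F : T -> R) x :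
  x \in s -> (forall y, 0 <= F y) -> F x <= \sum_(y <- s) F y.
Proof.
move=> xs F0; elim: s xs => [|z s IH] //; rewrite in_cons big_cons.
case/orP=> [/eqP <-|/IH H].
  by rewrite lerDl sumr_ge0.
by apply: (le_trans H); rewrite lerDr.
Qed.

Definition Dsum K C := \sum_(x <- C) \sum_(y <- C) (1 - K x y).

Definition term K C :=
  (size C)%:R - (size C)%:R^-1 * \sum_(x <- C) \sum_(y <- C) K x y.

Lemma sumc_seq (T : Type) (s : seq T) (c : R) : \sum_(x <- s) c = (size s)%:R * c.
Proof.
elim: s => [|x s IH]; first by rewrite big_nil mul0r.
by rewrite big_cons IH /= -add1n natrD mulrDl mul1r.
Qed.

Lemma termE K C : term K C = (size C)%:R^-1 * Dsum K C.
Proof.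
rewrite /term /Dsum.
have -> : \sum_(x <- C) \sum_(y <- C) (1 - K x y)
   = (size C)%:R * (size C)%:R - \sum_(x <- C) \sum_(y <- C) K x y.
  under eq_bigr do rewrite sumrB sum1_seq.
  by rewrite sumrB sumc_seq.
have [->|nz] := eqVneq (size C)%:R (0:R).
  by rewrite invr0 !mul0r subr0.
by rewrite mulrBr mulKf.
Qed.

Lemma Dsum_ge0 K C : (forall x y, K x y <= 1) -> 0 <= Dsum K C.
Proof.
by move=> K1; apply: sumr_ge0 => x _; apply: sumr_ge0 => y _; rewrite subr_ge0.
Qed.

Lemma term_ge0 K C : (forall x y, K x y <= 1) -> 0 <= term K C.
Proof.
by move=> K1; rewrite termE mulr_ge0 ?invr_ge0 ?ler0n ?Dsum_ge0.
Qed.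

Lemma term_eq0 K C : (forall x y, x \in C -> y \in C -> K x y = 1) -> term K C = 0.
Proof.
move=> H; rewrite termE /Dsum big_seq big1 ?mulr0 // => x xC.
by rewrite big_seq big1 // => y yC; rewrite H ?subrr.
Qed.

Lemma term_gt0 K C p q : (forall x y, K x y <= 1) -> p \in C -> q \in C ->
  K p q = 0 -> 0 < term K C.
Proof.
move=> K1 pC qC Kpq; rewrite termE mulr_gt0 //.
  rewrite invr_gt0 ltr0n; by case: C pC {qC}.
apply: (@lt_le_trans _ _ 1) => //.
have H1 : 0 <= 1 - K p q by rewrite subr_ge0.
have H2 : 1 - K p q <= \sum_(y <- C) (1 - K p y).
  have := @sum_mem_ge _ C (fun y => 1 - K p y) q qC; apply => y.
  by rewrite subr_ge0.
have H3 : \sum_(y <- C) (1 - K p y) <= Dsum K C.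
  have := @sum_mem_ge _ C (fun x => \sum_(y <- C) (1 - K x y)) p pC; apply => x.
  by apply: sumr_ge0 => y _; rewrite subr_ge0.
by move: H2 H3; rewrite Kpq subr0; apply: le_trans.
Qed.

Lemma cost_split K X cs : (forall x, K x x = 1) ->
  (\sum_(C <- cs) size C)%N = size X ->
  clusters_cost K X cs = \sum_(C <- cs) term K C.
Proof.
move=> Kxx Hs; rewrite /clusters_cost /term.
under eq_bigr do rewrite Kxx.
by rewrite sum1_seq -Hs natr_sum -sumrB.
Qed.

Lemma labeling_sizes k (f : 'rV[R]_d -> 'I_k) X :
  (\sum_(C <- labeling_clusters f X) size C)%N = size X.
Proof.
rewrite /labeling_clusters big_map.
elim: X => [|x X IH].
  by rewrite big1.
rewrite /= -[in RHS]IH -add1n.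
have -> : (\sum_(j <- enum 'I_k) size [seq x0 <- x :: X | f x0 == j]
   = \sum_(j <- enum 'I_k) ((f x == j) + size [seq x0 <- X | f x0 == j]))%N.
  by apply: eq_bigr => j _ /=; case: (f x == j).
rewrite big_split /=; congr (_ + _)%N.
rewrite big_enum /= (bigD1 (f x)) //= eqxx big1 // => j.
by rewrite eq_sym => /negbTE ->.
Qed.

Lemma leaf_sizes (t : itree R d) S :
  (\sum_(C <- leaf_clusters t S) size C)%N = size S.
Proof.
elim: t S => [|i th1 th2 l IHl r IHr] S /=.
  by rewrite big_cons big_nil addn0.
by rewrite big_cat /= IHl IHr !size_filter (count_predC (in_slab i th1 th2)).
Qed.

Lemma nleaves_gt0 (t : itree R d) : (0 < nleaves t)%N.
Proof. by elim: t => //= i _ _ l Hl r Hr; rewrite addn_gt0 Hl. Qed.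

Lemma nleaves1 (t : itree R d) : nleaves t = 1%N -> t = Leaf R d.
Proof.
case: t => // i a b l r /= H.
have := nleaves_gt0 l; have := nleaves_gt0 r; lia.
Qed.

Lemma node_cost_gt0 K X i a b p q :
  (forall x, K x x = 1) -> (forall x y, K x y <= 1) ->
  p \in X -> q \in X -> p ord0 i = q ord0 i -> K p q = 0 ->
  0 < tree_cost K (Node i a b (Leaf R d) (Leaf R d)) X.
Proof.
move=> Kxx K1 pX qX pqi Kpq.
rewrite /tree_cost cost_split // ?leaf_sizes //= big_cons big_cons big_nil addr0.
have Hs : in_slab i a b p = in_slab i a b q by rewrite /in_slab pqi.
case E: (in_slab i a b p).
  have H1 : 0 < term K [seq x <- X | in_slab i a b x].
    by apply: (@term_gt0 K _ p q K1 _ _ Kpq); rewrite mem_filter ?E ?pX -?Hs ?E.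
  have H2 := @term_ge0 K [seq x <- X | ~~ in_slab i a b x] K1.
  lra.
have H1 : 0 < term K [seq x <- X | ~~ in_slab i a b x].
  by apply: (@term_gt0 K _ p q K1 _ _ Kpq); rewrite mem_filter ?E ?pX -?Hs ?E.
have H2 := @term_ge0 K [seq x <- X | in_slab i a b x] K1.
lra.
Qed.

Lemma kernel_xx eps (x : 'rV[R]_d) : 0 <= eps -> nbhd_kernel eps x x = 1.
Proof.
move=> e0; rewrite /nbhd_kernel /dist2 big1 ?sqrtr0 ?e0 // => i _.
by rewrite subrr expr0n.
Qed.

Lemma kernel_le1 eps (x y : 'rV[R]_d) : nbhd_kernel eps x y <= 1.
Proof. by rewrite /nbhd_kernel; case: ifP. Qed.

End Aux.
Arguments nleaves_gt0 {R d}.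
Arguments nleaves1 {R d t}.

Definition mkp (R : realType) (u v : R) : 'rV[R]_2 :=
  \row_(j < 2) (if val j == 0%N then u else v).

Arguments mkp {R}.

Definition i1 : 'I_2 := @Ordinal 2 1 isT.

Lemma mkp0 (R : realType) (u v : R) : mkp u v ord0 ord0 = u.
Proof. by rewrite /mkp mxE. Qed.
Arguments mkp0 {R}.
Lemma mkp1 (R : realType) (u v : R) : mkp u v ord0 i1 = v.
Proof. by rewrite /mkp mxE. Qed.

Arguments mkp1 {R}.

Lemma mkp_eq (R : realType) (u v u' v' : R) :
  (mkp u v == mkp u' v') = (u == u') && (v == v').
Proof.
apply/eqP/andP => [H|[/eqP -> /eqP ->] //].
have := congr1 (fun m : 'rV[R]_2 => m ord0 ord0) H; have := congr1 (fun m : 'rV[R]_2 => m ord0 i1) H.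
by rewrite /= !mkp0 !mkp1 => -> ->; rewrite !eqxx.
Qed.

Lemma kerE (R : realType) (eps u v u' v' : R) : 0 <= eps ->
  nbhd_kernel eps (mkp u v) (mkp u' v') =
  if (u - u') ^+ 2 + (v - v') ^+ 2 <= eps ^+ 2 then 1 else 0.
Proof.
move=> e0; rewrite /nbhd_kernel /dist2 !big_ord_recr big_ord0 /= !mxE /= add0r.
have := ler_sqrt ((u - u') ^+ 2 + (v - v') ^+ 2) (sqr_ge0 eps).
by rewrite sqrtr_sqr ger0_norm // => ->.
Qed.
Theorem proposition2 (R : realType) (eps : R) :
  0 < eps ->
  exists (d k : nat) (X : seq 'rV[R]_d),
    uniq X /\
    is_cost_opt (@nbhd_kernel R d eps) k X 0 /\
    (forall t : itree R d, itree_valid t -> nleaves t = k ->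
       0 < tree_cost (@nbhd_kernel R d eps) t X).
Proof.
move=> e0; have e0' : 0 <= eps by apply: ltW.
set h := 2 * eps / 3.
have hpos : 0 < h by rewrite /h; lra.
set pa := mkp (- h) 0; set pb := mkp 0 (- h); set pc := mkp 0 h; set pe := mkp h 0.
pose K := @nbhd_kernel R 2 eps.
have Kxx : forall x : 'rV[R]_2, K x x = 1 by move=> x; apply: kernel_xx.
have K1 : forall x y : 'rV[R]_2, K x y <= 1 by move=> x y; apply: kernel_le1.
have Kin : forall u v u' v' : R, (u - u') ^+ 2 + (v - v') ^+ 2 <= eps ^+ 2 ->
  K (mkp u v) (mkp u' v') = 1.
  by move=> u v u' v' H; rewrite /K kerE // H.
have Kout : forall u v u' v' : R, eps ^+ 2 < (u - u') ^+ 2 + (v - v') ^+ 2 ->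
  K (mkp u v) (mkp u' v') = 0.
  by move=> u v u' v' H; rewrite /K kerE // leNgt H.
exists 2%N, 2%N, [:: pa; pb; pc; pe].
split.
  have n1 : (- h == 0) = false by apply/negbTE; rewrite oppr_eq0 gt_eqF.
  have n2 : (0 == - h) = false by rewrite eq_sym n1.
  have n3 : (h == 0) = false by apply/negbTE; rewrite gt_eqF.
  have n4 : (0 == h) = false by rewrite eq_sym n3.
  have n5 : (- h == h) = false by apply/negbTE; apply/eqP; lra.
  have n6 : (h == - h) = false by rewrite eq_sym n5.
  by rewrite /= !inE !mkp_eq ?n1 ?n2 ?n3 ?n4 ?n5 ?n6 ?andbF.
split.
  split; last first.
    move=> f; rewrite /partition_cost cost_split ?labeling_sizes //.
    by apply: sumr_ge0 => C _; apply: term_ge0.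
  pose f := fun x : 'rV[R]_2 => if x ord0 ord0 + x ord0 i1 < 0 then ord0 else i1.
  exists f; rewrite /partition_cost cost_split ?labeling_sizes //.
  rewrite big_seq big1 // => C /mapP [l _ ->]; apply: term_eq0 => x y.
  rewrite !mem_filter => /andP [/eqP fx xX] /andP [/eqP fy yX].
  have fxy : f x = f y by rewrite fx fy.
  have fa : f pa = ord0 by rewrite /f mkp0 mkp1 ifT //; lra.
  have fb : f pb = ord0 by rewrite /f mkp0 mkp1 ifT //; lra.
  have fc : f pc = i1 by rewrite /f mkp0 mkp1 ifF //; apply/negbTE; rewrite -leNgt; lra.
  have fe : f pe = i1 by rewrite /f mkp0 mkp1 ifF //; apply/negbTE; rewrite -leNgt; lra.
  move: xX yX fxy; rewrite !inE.
  case/or4P => /eqP ->; case/or4P => /eqP ->;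
    rewrite ?fa ?fb ?fc ?fe // => _; rewrite ?Kxx //; apply: Kin; rewrite /h; nra.
move=> [|i a b l r] //= [_ _] Hn.
have Hl : nleaves l = 1%N.
  have := nleaves_gt0 l; have := nleaves_gt0 r; lia.
have Hr : nleaves r = 1%N.
  have := nleaves_gt0 l; have := nleaves_gt0 r; lia.
rewrite (nleaves1 Hl) (nleaves1 Hr).
case: i => [[|[|m]] Hm] //.
  apply: (@node_cost_gt0 R 2 K _ _ _ _ pb pc Kxx K1).
  - by rewrite !inE eqxx ?orbT.
  - by rewrite !inE eqxx ?orbT.
  - have -> : Ordinal Hm = ord0 by apply: val_inj.
    by rewrite !mkp0.
  - by apply: Kout; rewrite /h; nra.
apply: (@node_cost_gt0 R 2 K _ _ _ _ pa pe Kxx K1).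
- by rewrite !inE eqxx ?orbT.
- by rewrite !inE eqxx ?orbT.
- have -> : Ordinal Hm = i1 by apply: val_inj.
  by rewrite !mkp1.
- by apply: Kout; rewrite /h; nra.
Qed.
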